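(* Consider a 3-S 3-D MUN-D with time-varying LECs (as in the context), $n>d_{max}$, positive integers $n\ge n_1\ge n_2\ge n_3$, in which the min-cut between $S_2$ and $T_1$ is $0$ (so $M_{21}=0$) and the min-cut between $S_i$ and $T_j$ is at least $1$ for every other pair $(i,j)$. Let $V_1=[\theta_{ab}]$ ($n\times n_1$), $A$ ($n_1\times n_2$), $B$ ($n_1\times n_3$) have indeterminate entries and $V_2=M_{23}^{-1}M_{13}V_1A$, $V_3=M_{32}^{-1}M_{12}V_1B$. If, over the field of rational functions in the LECs and these indeterminates, $$\mathrm{Rank}[V_1\ \ M_{11}^{-1}M_{31}V_3]=n_1+n_3,\quad \mathrm{Rank}[M_{12}^{-1}M_{22}V_2\ \ V_1]=n_1+n_2,\quad \mathrm{Rank}[M_{13}^{-1}M_{33}V_3\ \ V_1]=n_1+n_3,$$ then there is an assignment of values (from a sufficiently large finite field of characteristic $p$) to the LECs and indeterminates such that in the system $Y_j=\sum_{i=1}^3M_{ij}V_iX_i'$ ($X_i'$ of length $n_i$) each $X_j'$ can be exactly recovered from $Y_j$ ($j=1,2,3$). These conditions are also necessary when $n_1+n_2=n_1+n_3=n$.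
   Context: A 3-S 3-D MUN-D: finite directed acyclic graph, links carrying one symbol of a field of characteristic $p$ per time unit with unit delay, sources $S_1,S_2,S_3$ (one process each), destinations $T_1,T_2,T_3$ ($T_i$ demands $S_i$'s process), min-cut between $S_i$ and $T_i$ equal to $1$. Time-varying LECs: $\underline{\varepsilon}^{(t)}$ is the LEC vector at time $t$; $Y_j^{(t)}=\sum_{i}\sum_{d=0}^{d_{max}}M_{ij}^{(d)}(\underline{\varepsilon}^{(t-d,t)})X_i^{(t-d)}$, where $M_{ij}^{(d)}(\underline{\varepsilon}^{(t-d,t)})$ is the response at $T_j$ at time $t$ to a unit symbol from $S_i$ at time $t-d$, a polynomial in the LECs of times $t-d,\dots,t$. Each source sends $n$ generations preceded by a cyclic prefix of its last $d_{max}$ generations starting at time $-d_{max}$. $M_{ij}$ is the $n\times n$ matrix (rows/columns indexed $0,\dots,n-1$) with entry $M_{ij}^{(d)}(\underline{\varepsilon}^{(n-1-r-d,\,n-1-r)})$ in row $r$, column $(r+d)\bmod n$ for $0\le d\le d_{max}$, zero elsewhere. The source block is $X_i^n=V_iX_i'$; exact recovery of $X_j'$ from $Y_j$ means existence of a matrix $G_j$ with $G_jY_j=X_j'$ for all inputs. *)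

(* Defs.v *)
From HB Require Import structures.
From mathcomp Require Import all_boot all_order all_algebra all_field.
From mathcomp Require Import fraction.
From mathcomp Require Import mpoly.
Set Implicit Arguments. Unset Strict Implicit. Unset Printing Implicit Defensive.
Import GRing.Theory.
Local Open Scope ring_scope.

Record network := Network {
  node  : finType;
  link  : finType;
  ltail : link -> node;
  lhead : link -> node;
  src   : 'I_3 -> node;   (* S_1, S_2, S_3  (indices 0,1,2) *)
  dst   : 'I_3 -> node }. (* T_1, T_2, T_3  (indices 0,1,2) *)

Definition i0 : 'I_3 := @Ordinal 3 0 isT.
Definition i1 : 'I_3 := @Ordinal 3 1 isT.
Definition i2 : 'I_3 := @Ordinal 3 2 isT.

Section Net.
Variable N : network.

Definition step_avoid (C : {set link N}) : rel (node N) :=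
  fun u v => [exists e, (e \notin C) && (ltail e == u) && (lhead e == v)].

Definition acyclic : bool :=
  [forall e : link N, ~~ connect (step_avoid set0) (lhead e) (ltail e)].

(* min-cut: the least number of links whose removal disconnects t from s
   (#|link|.+1, i.e. "infinite", if no such set exists, e.g. s = t) *)
Definition mincut (s t : node N) : nat :=
  \big[minn/#|link N|.+1]_(C : {set link N} | ~~ connect (step_avoid C) s t) #|C|.

Definition is_walk (s t : node N) (p : seq (link N)) : bool :=
  if p is e :: p' then
    [&& ltail e == s, path (fun a b => lhead a == ltail b) e p'
      & lhead (last e p') == t]
  else false.

(* maximal delay: longest source-destination path (unit delay per link) *)
Definition dmax : nat :=
  \max_(L < #|link N|.+1 |
        [exists i : 'I_3, exists j : 'I_3, exists p : L.-tuple (link N),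
           is_walk (src N i) (dst N j) p]) L.

(* local encoding coefficient slots (at each time instant):
   inl (inl (i,e)) : coefficient of X_i onto outgoing link e of S_i
   inl (inr (e',e)): coefficient of incoming link e' onto outgoing link e
   inr (e,j)       : coefficient of incoming link e at destination T_j  *)
Definition Slot : finType :=
  ((('I_3 * link N) + (link N * link N)) + (link N * 'I_3))%type.

Section Sizes.
Variables n n1 n2 n3 : nat.

(* all indeterminates: time-varying LECs (times -dmax .. n-1 stored with
   the shift tau = t + dmax), entries theta_ab of V1, entries of A, of B *)
Definition Var : finType :=
  (((('I_(dmax + n) * Slot) + ('I_n * 'I_n1)) + ('I_n1 * 'I_n2))
     + ('I_n1 * 'I_n3))%type.

Section Generic.
Variable R : comUnitRingType.
Variable x : Var -> R.

Definition eps (tau : nat) (s : Slot) : R :=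
  match (insub tau : option 'I_(dmax + n)) with
  | Some k => x (inl (inl (inl (k, s))))
  | None => 0
  end.

(* symbols on the links at (shifted) time sigma + k, in response to a unit
   symbol emitted by S_i at (shifted) time sigma (all other inputs zero);
   each link carries one symbol per time unit, with unit delay *)
Fixpoint state (i : 'I_3) (sigma : nat) (k : nat) : link N -> R :=
  match k with
  | 0 => fun e => if ltail e == src N i then eps sigma (inl (inl (i, e))) else 0
  | k'.+1 => fun e =>
      \sum_(e' : link N | lhead e' == ltail e)
         eps (sigma + k'.+1)%N (inl (inr (e', e))) * state i sigma k' e'
  end.

(* M_ij^(d) at (shifted) time tau: response at T_j at time tau to a unit
   symbol from S_i at time tau - d *)
Definition resp (i j : 'I_3) (d tau : nat) : R :=
  if d is d'.+1 then
    \sum_(e : link N | lhead e == dst N j)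
       eps tau (inr (e, j)) * state i (tau - d)%N d' e
  else 0.

(* the n x n matrix M_ij: entry M_ij^(d)(eps^(n-1-r-d, n-1-r)) in row r,
   column (r+d) mod n, for 0 <= d <= dmax; zero elsewhere *)
Definition Mmx (i j : 'I_3) : 'M[R]_n :=
  \matrix_(r < n, c < n)
     \sum_(d < dmax.+1 | ((r + d) %% n)%N == c) resp i j d (n - 1 - r + dmax)%N.

Definition V1 : 'M[R]_(n, n1) := \matrix_(a < n, b < n1) x (inl (inl (inr (a, b)))).
Definition Amx : 'M[R]_(n1, n2) := \matrix_(a < n1, b < n2) x (inl (inr (a, b))).
Definition Bmx : 'M[R]_(n1, n3) := \matrix_(a < n1, b < n3) x (inr (a, b)).

Definition V2 : 'M[R]_(n, n2) := invmx (Mmx i1 i2) *m Mmx i0 i2 *m V1 *m Amx.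
Definition V3 : 'M[R]_(n, n3) := invmx (Mmx i2 i1) *m Mmx i0 i1 *m V1 *m Bmx.

Definition Yout (j : 'I_3) (X1 : 'cV[R]_n1) (X2 : 'cV[R]_n2) (X3 : 'cV[R]_n3)
  : 'cV[R]_n :=
  Mmx i0 j *m V1 *m X1 + Mmx i1 j *m V2 *m X2 + Mmx i2 j *m V3 *m X3.

Definition decodable : Prop :=
  [/\ exists G : 'M[R]_(n1, n), forall X1 X2 X3, G *m Yout i0 X1 X2 X3 = X1,
      exists G : 'M[R]_(n2, n), forall X1 X2 X3, G *m Yout i1 X1 X2 X3 = X2
    & exists G : 'M[R]_(n3, n), forall X1 X2 X3, G *m Yout i2 X1 X2 X3 = X3].

(* the assignment makes every transfer matrix M_ij, (i,j) <> (2,1),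
   invertible, so that all inverses used above are the true inverses *)
Definition admissible : Prop :=
  forall i j : 'I_3, (i, j) != (i1, i0) -> Mmx i j \in unitmx.

End Generic.

Definition RatF (p : nat) : fieldType := {fraction {mpoly 'F_p[#|Var|]}}.

Definition xsym (p : nat) : Var -> RatF p :=
  fun v => @FracField.tofrac _ ('X_(enum_rank v)).

Definition rank_conditions (p : nat) : Prop :=
  let x := xsym p in
  [/\ \rank (row_mx (V1 x) (invmx (Mmx x i0 i0) *m Mmx x i2 i0 *m V3 x)) = (n1 + n3)%N,
      \rank (row_mx (invmx (Mmx x i0 i1) *m Mmx x i1 i1 *m V2 x) (V1 x)) = (n1 + n2)%N
    & \rank (row_mx (invmx (Mmx x i0 i2) *m Mmx x i2 i2 *m V3 x) (V1 x)) = (n1 + n3)%N].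

End Sizes.
End Net.

(* Main.v *)
Require Import Defs.
From HB Require Import structures.
From mathcomp Require Import all_boot all_order all_algebra all_field.
From mathcomp Require Import fraction.
From mathcomp Require Import mpoly.
From mathcomp Require Import zify.
From Stdlib Require Import FunctionalExtensionality.
Set Implicit Arguments. Unset Strict Implicit. Unset Printing Implicit Defensive.
Import GRing.Theory.

Local Open Scope ring_scope.

Section MapLemmas.
Variables (N : network) (n n1 n2 n3 : nat) (R S : comUnitRingType).
Variable f : {rmorphism R -> S}.
Variable x : Var N n n1 n2 n3 -> R.

Lemma eps_map tau s : eps (fun v => f (x v)) tau s = f (eps x tau s).
Proof. by rewrite /eps; case: insub => [k|] //; rewrite rmorph0. Qed.

Lemma state_map i sg k e :
  state (fun v => f (x v)) i sg k e = f (state x i sg k e).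
Proof.
elim: k e => [|k IH] e /=.
  by case: ifP => _; rewrite ?rmorph0 ?eps_map.
rewrite rmorph_sum; apply: eq_bigr => e' _.
by rewrite rmorphM eps_map IH.
Qed.

Lemma resp_map i j d tau : resp (fun v => f (x v)) i j d tau = f (resp x i j d tau).
Proof.
case: d => [|d] /=; first by rewrite rmorph0.
rewrite rmorph_sum; apply: eq_bigr => e _.
by rewrite rmorphM eps_map state_map.
Qed.

Lemma Mmx_map i j : Mmx (fun v => f (x v)) i j = map_mx f (Mmx x i j).
Proof.
apply/matrixP => r c; rewrite !mxE rmorph_sum; apply: eq_bigr => d _.
by rewrite resp_map.
Qed.

Lemma V1_map : V1 (fun v => f (x v)) = map_mx f (V1 x).
Proof. by apply/matrixP => r c; rewrite !mxE. Qed.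
Lemma Amx_map : Amx (fun v => f (x v)) = map_mx f (Amx x).
Proof. by apply/matrixP => r c; rewrite !mxE. Qed.
Lemma Bmx_map : Bmx (fun v => f (x v)) = map_mx f (Bmx x).
Proof. by apply/matrixP => r c; rewrite !mxE. Qed.
End MapLemmas.

Local Open Scope ring_scope.

Section LinAlg.
Variable K : fieldType.

Lemma decode_gen m a b (P : 'M[K]_(m, a + b)) :
  \rank P = (a + b)%N ->
  exists G : 'M[K]_(a, m), forall (X : 'cV_a) (Z : 'cV_b), G *m (P *m col_mx X Z) = X.
Proof.
move=> rk; have /row_fullP [B hB] : row_full P by rewrite /row_full rk.
exists (usubmx B) => X Z.
by rewrite mul_usub_mx mulmxA hB mul1mx col_mxKu.
Qed.

Lemma leftinv_rank m a b (A : 'M[K]_(m, a)) (B : 'M[K]_(m, b)) GA GB :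
  GA *m A = 1%:M -> GA *m B = 0 -> GB *m B = 1%:M ->
  \rank (row_mx A B) = (a + b)%N.
Proof.
move=> h1 h2 h3; apply/eqP; rewrite eqn_leq rank_leq_col /=.
pose L := col_mx GA (GB *m (1%:M - A *m GA)).
have hL : L *m row_mx A B = 1%:M.
  rewrite mul_col_row h1 h2 -!mulmxA !mulmxBl !mul1mx -!mulmxA h1 h2 mulmx0 subr0 mulmx1.
  by rewrite subrr mulmx0 h3 -scalar_mx_block.
by rewrite -{1}(mxrank1 K (a + b)%N) -hL mxrankM_maxr.
Qed.

Lemma block_unit a b (c : K) : c != 0 ->
  block_mx (1%:M : 'M_a) 0 0 (c%:M : 'M_b) \in unitmx.
Proof.
move=> c0.
have : block_mx (1%:M : 'M_a) 0 0 (c%:M : 'M_b) *m block_mx 1%:M 0 0 (c^-1%:M) = 1%:M.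
  by rewrite mulmx_block !mulmx0 !mul0mx !addr0 !add0r mulmx1 -scalar_mxM mulfV // -scalar_mx_block.
by case/mulmx1_unit.
Qed.

Lemma rank_scale_r m a b (A : 'M[K]_(m, a)) (B : 'M[K]_(m, b)) c : c != 0 ->
  \rank (row_mx A (c *: B)) = \rank (row_mx A B).
Proof.
move=> c0.
have -> : row_mx A (c *: B) = row_mx A B *m block_mx 1%:M 0 0 c%:M.
  by rewrite mul_row_block !mulmx0 addr0 add0r mulmx1 mul_mx_scalar.
by rewrite mxrankMfree // row_free_unit block_unit.
Qed.

Lemma rank_scale_l m a b (A : 'M[K]_(m, a)) (B : 'M[K]_(m, b)) c : c != 0 ->
  \rank (row_mx (c *: A) B) = \rank (row_mx A B).
Proof.
move=> c0.
have -> : row_mx (c *: A) B = row_mx A B *m block_mx c%:M 0 0 1%:M.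
  by rewrite mul_row_block !mulmx0 addr0 add0r mulmx1 mul_mx_scalar.
have hu : block_mx (c%:M : 'M_a) 0 0 (1%:M : 'M_b) \in unitmx.
  have : block_mx (c%:M : 'M_a) 0 0 (1%:M : 'M_b) *m block_mx (c^-1%:M) 0 0 1%:M = 1%:M.
    by rewrite mulmx_block !mulmx0 !mul0mx !addr0 !add0r mulmx1 -scalar_mxM mulfV // -scalar_mx_block.
  by case/mulmx1_unit.
by rewrite mxrankMfree // row_free_unit.
Qed.

End LinAlg.

Section Minor.
Variables (R0 : comNzRingType) (K : fieldType) (f : {rmorphism R0 -> K}).

Lemma map_rowsub m k l (s : 'I_k -> 'I_m) (P : 'M[R0]_(m, l)) :
  map_mx f (rowsub s P) = rowsub s (map_mx f P).
Proof. by apply/matrixP => i j; rewrite !mxE. Qed.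

Lemma minor_of_rank m k (P : 'M[R0]_(m, k)) :
  \rank (map_mx f P) = k -> exists s : 'I_k -> 'I_m, f (\det (rowsub s P)) != 0.
Proof.
move=> rk; have hf : row_full (map_mx f P) by rewrite /row_full rk.
exists (fullrankfun hf); rewrite -det_map_mx map_rowsub.
by have := fullrowsub_unit hf; rewrite unitmxE unitfE.
Qed.

Lemma rank_of_minor m k (P : 'M[R0]_(m, k)) (s : 'I_k -> 'I_m) :
  f (\det (rowsub s P)) != 0 -> \rank (map_mx f P) = k.
Proof.
move=> h; apply/eqP; rewrite eqn_leq rank_leq_col /=.
have hu : rowsub s (map_mx f P) \in unitmx.
  by rewrite unitmxE unitfE -map_rowsub det_map_mx.
rewrite -{1}(mxrank_unit hu) rowsubE; exact: mxrankM_maxr.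
Qed.
End Minor.

Local Open Scope ring_scope.

Section SZ.
Variable F : finFieldType.
Local Notation widen := (widen_ord (leqnSn _)).

Definition restr m (mon : 'X_{1..m.+1}) : 'X_{1..m} :=
  [multinom mon (widen i) | i < m].

Definition extv m (v : 'I_m -> F) (t : F) (i : 'I_m.+1) : F :=
  if (insub (val i) : option 'I_m) is Some j then v j else t.

Lemma extv_widen m v t (j : 'I_m) : extv v t (widen j) = v j.
Proof.
rewrite /extv; case: insubP => [j' _ e|]; last by rewrite /= ltn_ord.
by congr v; apply: val_inj.
Qed.

Lemma extv_max m v t : extv v t (@ord_max m) = t.
Proof. by rewrite /extv; case: insubP => [j' h _|//]; move: h; rewrite /= ltnn. Qed.

Lemma restr_inj m (a b : 'X_{1..m.+1}) :
  restr a = restr b -> a ord_max = b ord_max -> a = b.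
Proof.
move=> h1 h2; apply/mnmP => i.
have [hi|hi] := ltnP i m.
  have -> : i = widen (Ordinal hi) by apply: val_inj.
  by move: (congr1 (fun z : 'X_{1..m} => z (Ordinal hi)) h1); rewrite !mnmE.
have -> : i = ord_max by apply: val_inj; apply/eqP; rewrite eqn_leq hi -ltnS ltn_ord.
exact: h2.
Qed.

Lemma mdeg_restr m (a : 'X_{1..m.+1}) : (mdeg (restr a) <= mdeg a)%N.
Proof.
rewrite !mdegE big_ord_recr /=.
rewrite (eq_bigr (fun i : 'I_m => a (widen i))) ?leq_addr // => i _.
by rewrite mnmE.
Qed.

Lemma SZ m (q : {mpoly F[m]}) : q != 0 -> (msize q <= #|F|)%N ->
  exists v : 'I_m -> F, q.@[v] != 0.
Proof.
elim: m q => [|m IH] q q0 hs.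
  exists (fun i => 0).
  have -> : q = (q@_0%MM)%:MP.
    apply/mpolyP => mon; rewrite mcoeffC.
    have -> : mon = 0%MM by apply/mnmP => -[].
    by rewrite eqxx mulr1.
  rewrite mevalC; apply: contraNneq q0 => h.
  by apply/eqP/mpolyP => mon; rewrite mcoeff0; have -> : mon = 0%MM by apply/mnmP => -[].
pose ck (k : nat) : {mpoly F[m]} :=
  \sum_(mon <- msupp q | mon ord_max == k) q@_mon *: 'X_[restr mon].
have hck : forall k, (msize (ck k) <= msize q)%N.
  move=> k; apply: leq_trans (msize_sum _ _ _) _.
  apply/bigmax_leqP_seq => mon hm _.
  apply: leq_trans (msizeZ_le _ _) _; rewrite msizeX.
  exact: leq_ltn_trans (mdeg_restr mon) (msize_mdeg_lt hm).
have hev : forall v t, q.@[extv v t] =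
    (\poly_(k < msize q) (ck k).@[v]).[t].
  move=> v t; rewrite horner_poly mevalE.
  have E1 : forall k, (ck k).@[v] = \sum_(mon <- msupp q | mon ord_max == k)
      q@_mon * \prod_(i < m) v i ^+ mon (widen i).
    move=> k; rewrite /ck (big_morph _ (mevalD v) (meval0 v)).
    apply: eq_bigr => mon _; rewrite mevalZ mevalX; congr (_ * _).
    by apply: eq_bigr => i _; rewrite mnmE.
  under [RHS]eq_bigr => k _ do rewrite E1 big_distrl /= big_mkcond /=.
  rewrite exchange_big /=; apply: eq_big_seq => mon hm.
  have hlt : (mon ord_max < msize q)%N.
    have := msize_mdeg_lt hm; apply: leq_ltn_trans.
    by rewrite mdegE (bigD1 ord_max) //= leq_addr.
  rewrite [RHS](bigD1 (Ordinal hlt)) //= eqxx [X in _ + X]big1 ?addr0; last first.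
    move=> k hk; case: ifP => // /eqP he; case/eqP: hk; apply: val_inj; by rewrite /= he.
  rewrite big_ord_recr /= extv_max -mulrA; congr (_ * (_ * _)).
  by apply: eq_bigr => i _; rewrite extv_widen.
have hm0 := mlead_supp q0.
set mon0 := mlead q in hm0.
have hk0 : (mon0 ord_max < msize q)%N.
  apply: (leq_ltn_trans _ (msize_mdeg_lt hm0)).
  by rewrite mdegE (bigD1 ord_max) //= leq_addr.
have ck0 : ck (mon0 ord_max) != 0.
  apply/negP => /eqP h.
  have := congr1 (mcoeff (restr mon0)) h.
  rewrite mcoeff0 /ck raddf_sum /=.
  under eq_bigr => mon _ do rewrite mcoeffZ mcoeffX.
  rewrite big_mkcond /= (bigD1_seq mon0 hm0 (msupp_uniq q)) /= !eqxx mulr1 big1 ?addr0.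
    by move=> h0; move: hm0; rewrite mcoeff_msupp h0 eqxx.
  move=> mon hmon; case: ifP => // /eqP hl.
  case: eqP => [hr|]; last by rewrite mulr0.
  by move: hmon; rewrite (restr_inj hr hl) eqxx.
have [v hv] := IH _ ck0 (leq_trans (hck _) hs).
pose Q := \poly_(k < msize q) (ck k).@[v].
have hQ : Q != 0.
  apply/negP => /eqP hQ; move: (congr1 (fun P : {poly F} => P`_(mon0 ord_max)) hQ).
  by rewrite /= coef_poly hk0 coef0; apply/eqP.
have : ~~ all (root Q) (enum F).
  apply/negP => hall; have := max_poly_roots hQ hall (enum_uniq F).
  rewrite -cardE ltnNge; move/negP; apply.
  exact: leq_trans (size_poly _ _) hs.
case/allPn => t _ ht; exists (extv v t); rewrite hev; exact: ht.
Qed.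
End SZ.

Local Open Scope ring_scope.

Section Phi.
Variables (p : nat) (F : fieldType).
Hypothesis pr : prime p.
Hypothesis chF : p \in [pchar F].

Definition phi (a : 'F_p) : F := (nat_of_ord a)%:R.

Lemma phi_nat k : phi (k%:R) = k%:R.
Proof. by rewrite /phi val_Fp_nat // GRing.natr_mod_pchar. Qed.

Lemma Fp_natE (a : 'F_p) : a = (nat_of_ord a)%:R.
Proof.
apply/val_inj; rewrite /= val_Fp_nat // modn_small //.
by case: a => a /=; rewrite Fp_cast.
Qed.

Lemma phiD a b : phi (a + b) = phi a + phi b.
Proof. by rewrite [a]Fp_natE [b]Fp_natE -natrD !phi_nat natrD. Qed.

Lemma phi_zmod : zmod_morphism phi.
Proof.
move=> a b; apply: (addIr (phi b)); by rewrite -phiD !subrK.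
Qed.

Lemma phi_monoid : monoid_morphism phi.
Proof.
split; first by rewrite -[1]/(1%:R) phi_nat.
by move=> a b; rewrite [a]Fp_natE [b]Fp_natE -natrM !phi_nat natrM.
Qed.

HB.instance Definition _ := GRing.isZmodMorphism.Build 'F_p F phi phi_zmod.
HB.instance Definition _ := GRing.isMonoidMorphism.Build 'F_p F phi phi_monoid.

Definition phiR : {rmorphism 'F_p -> F} := phi.

Lemma map_mpoly_phi_eq0 m (q : {mpoly 'F_p[m]}) : (map_mpoly phiR q == 0) = (q == 0).
Proof.
apply/eqP/eqP => [h|->]; last exact: rmorph0.
apply/mpolyP => mon; move: (congr1 (mcoeff mon) h).
rewrite mcoeff_map_mpoly mcoeff0 => /eqP; rewrite mcoeff0 -(rmorph0 phiR).
by move/eqP/fmorph_inj.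
Qed.

Lemma msize_map_phi m (q : {mpoly 'F_p[m]}) : msize (map_mpoly phiR q) = msize q.
Proof.
by rewrite !msizeE (perm_big _ (msupp_map_mpoly q (@fmorph_inj _ _ phiR))).
Qed.
End Phi.

Local Open Scope ring_scope.

Section Graph.
Variable N : network.

Lemma step0 (e : link N) : step_avoid set0 (ltail e) (lhead e).
Proof. by apply/existsP; exists e; rewrite inE !eqxx. Qed.

Lemma bigmin_le (T : finType) (P : pred T) (F : T -> nat) idx C0 :
  P C0 -> (\big[minn/idx]_(C | P C) F C <= F C0)%N.
Proof.
move=> hP; have : C0 \in index_enum T by rewrite mem_index_enum.
elim: (index_enum T) => //= a r IH; rewrite inE big_cons.
case/orP => [/eqP <-|hr]; first by rewrite hP geq_minl.
case: ifP => _; last exact: IH.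
exact: leq_trans (geq_minr _ _) (IH hr).
Qed.

Lemma mincut_gt0 (s t : node N) : (0 < mincut s t)%N -> connect (step_avoid set0) s t.
Proof.
apply: contraTT => hc; rewrite -leqNgt.
by have := @bigmin_le _ (fun C => ~~ connect (step_avoid C) s t) (fun C => #|C|) #|link N|.+1 set0 hc; rewrite cards0.
Qed.

Lemma mincut_eq0 (s t : node N) : mincut s t = 0%N -> ~~ connect (step_avoid set0) s t.
Proof.
move=> h; apply/negP => hc; move: h; apply/eqP; rewrite -lt0n /mincut.
apply: (big_ind (fun x => 0 < x)%N) => //.
  by move=> a b ha hb; rewrite leq_min ha hb.
move=> C hC; rewrite card_gt0; apply: contraNneq hC => ->; by rewrite hc.
Qed.

Variables (n n1 n2 n3 : nat) (R : comUnitRingType) (x : Var N n n1 n2 n3 -> R).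

Lemma state_reach i sg k e : state x i sg k e != 0 ->
  connect (step_avoid set0) (src N i) (ltail e).
Proof.
elim: k e => [|k IH] e /=.
  by case: ifP => [/eqP -> _|_]; rewrite ?eqxx.
move=> h; have [e' he' hne] : exists2 e', lhead e' == ltail e & state x i sg k e' != 0.
  apply/exists_inP; apply: contraNT h => /exists_inPn hall.
  rewrite big1 // => e' he'; have := hall e' he'; rewrite negbK => /eqP ->.
  by rewrite mulr0.
apply: connect_trans (IH _ hne) _; rewrite -(eqP he'); exact/connect1/step0.
Qed.

Lemma resp_zero i j :
  ~~ connect (step_avoid set0) (src N i) (dst N j) -> forall d tau, resp x i j d tau = 0.
Proof.
move=> hn [|d] tau //=; rewrite big1 // => e /eqP he.
case: (eqVneq (state x i (tau - d.+1) d e) 0) => [->|hs]; first by rewrite mulr0.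
case/negP: hn; rewrite -he; apply: connect_trans (state_reach hs) _; exact/connect1/step0.
Qed.

Lemma Mmx_zero i j :
  ~~ connect (step_avoid set0) (src N i) (dst N j) -> Mmx x i j = 0.
Proof.
move=> hn; apply/matrixP => r c; rewrite !mxE big1 // => d _; exact: resp_zero.
Qed.

Lemma Mmx_zero_loop i j : acyclic N -> src N i = dst N j -> Mmx x i j = 0.
Proof.
move=> hac hij; apply/matrixP => r c; rewrite !mxE big1 // => -[[|d] hd] _ //=.
rewrite big1 // => e /eqP he.
case: (eqVneq (state x i (n - 1 - r + dmax N - d.+1) d e) 0) => [->|hs]; first by rewrite mulr0.
have := state_reach hs; rewrite hij -he => hc.
by move/forallP: hac => /(_ e); rewrite hc.
Qed.
End Graph.

Local Open Scope ring_scope.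

Section Spec.
Variables (N : network) (n n1 n2 n3 : nat) (R : comUnitRingType).
Variables (i j : 'I_3) (es : seq (link N)) (e0 : link N).
Local Notation L := (size es).
Local Notation E k := (nth e0 es k).
Hypothesis hL0 : (0 < L)%N.
Hypothesis huniq : uniq es.
Hypothesis htail : ltail (E 0) = src N i.
Hypothesis hchain : forall k, (k.+1 < L)%N -> lhead (E k) = ltail (E k.+1).
Hypothesis hhead : lhead (E L.-1) = dst N j.
Hypothesis hLd : (L <= dmax N)%N.
Hypothesis hn : (dmax N < n)%N.

Definition coef (s : Slot N) : R :=
  match s with
  | inl (inl (_, e)) => (e == E 0)%:R
  | inl (inr (e', e)) => ((e' \in es) && ((index e' es).+1 < L)%N && (e == E (index e' es).+1))%:R
  | inr (e, _) => (e == E L.-1)%:R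
  end.

Definition xs (v : Var N n n1 n2 n3) : R :=
  match v with
  | inl (inl (inl (_, s))) => coef s
  | _ => 0
  end.

Lemma eps_xs tau s : (tau < dmax N + n)%N -> eps xs tau s = coef s.
Proof.
by move=> h; rewrite /eps; case: insubP => [k _ _ //|]; rewrite h.
Qed.

Lemma state_xs k : forall e sg, (sg + k < dmax N + n)%N ->
  state xs i sg k e = ((k < L)%N && (e == E k))%:R.
Proof.
elim: k => [|k IH] e sg hsg /=.
  rewrite eps_xs; last by rewrite addn0 in hsg.
  rewrite /coef; case: (eqVneq e (E 0)) => [->|ne] /=.
    by rewrite htail eqxx hL0.
  by rewrite andbF; case: ifP.
rewrite big_mkcond /= (bigD1 (E k)) //= big1 ?addr0; last first.
  move=> e' he'; case: ifP => // _; rewrite IH; first by rewrite (negbTE he') andbF mulr0.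
  by apply: leq_ltn_trans hsg; rewrite addnS leqnSn.
rewrite IH ?eqxx ?andbT; last by apply: leq_ltn_trans hsg; rewrite addnS leqnSn.
rewrite eps_xs /=; last by apply: leq_ltn_trans hsg; rewrite addnS.
case: (ltnP k L) => hk; last first.
  by rewrite mulr0 ltnNge (leq_trans hk) //; case: ifP.
rewrite mulr1 mem_nth // index_uniq //=.
case: (ltnP k.+1 L) => hk1 /=; last by case: ifP.
case: (eqVneq e (E k.+1)) => [->|ne] /=; last by case: ifP.
by rewrite hchain // eqxx.
Qed.

Lemma resp_xs d tau : (d <= tau)%N -> (tau < dmax N + n)%N ->
  resp xs i j d tau = (d == L)%:R.
Proof.
case: d => [|d] hd ht /=; first by rewrite eq_sym eqn0Ngt hL0.
rewrite big_mkcond /= (bigD1 (E L.-1)) //= big1 ?addr0; last first.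
  move=> e he; case: ifP => // _; rewrite eps_xs //= (negbTE he) mul0r //.
rewrite hhead eqxx eps_xs //= eqxx mul1r state_xs; last first.
  apply: leq_ltn_trans ht; apply: leq_trans (leqnSn _) _; by rewrite -addnS subnK.
case: (ltnP d L) => hdl /=.
  rewrite nth_uniq //; last by rewrite prednK.
  by rewrite -(inj_eq succn_inj) prednK // eq_sym.
by rewrite gtn_eqF // ltnS.
Qed.

Definition shiftmx (a : nat) : 'M[R]_n := \matrix_(r < n, c < n) (((r + a) %% n)%N == c)%:R.

Lemma Mmx_xs : Mmx xs i j = shiftmx L.
Proof.
apply/matrixP => r c; rewrite !mxE.
have hLd1 : (L < (dmax N).+1)%N by [].
have hr := ltn_ord r.
rewrite big_mkcond /= (bigD1 (Ordinal hLd1)) //= big1 ?addr0.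
  rewrite resp_xs ?eqxx; first (by case: ifP); lia.
move=> d hd; have := ltn_ord d; case: ifP => // _ hdd; rewrite resp_xs; try lia.
by rewrite (_ : (nat_of_ord d == L) = false) //; apply/negbTE; apply: contra hd => /eqP hdL; apply/eqP/val_inj.
Qed.

Lemma shift_unit a : (a <= n)%N -> shiftmx a \in unitmx.
Proof.
move=> ha.
suff : shiftmx a *m shiftmx (n - a) = 1%:M by case/mulmx1_unit.
apply/matrixP => r c; rewrite !mxE.
have hr := ltn_ord r.
have hn0 : (0 < n)%N by lia.
have hk : ((r + a) %% n < n)%N by rewrite ltn_mod.
rewrite (bigD1 (Ordinal hk)) //= big1 ?addr0.
  rewrite !mxE eqxx mul1r.
  have -> : (((r + a) %% n + (n - a)) %% n = r)%N.
    by rewrite modnDml -addnA subnKC // modnDr modn_small.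
  by [].
move=> k hk'; rewrite !mxE; case: eqP => [he|]; last by rewrite mul0r.
by case/eqP: hk'; apply: val_inj; rewrite /= he.
Qed.

Lemma Mmx_xs_unit : Mmx xs i j \in unitmx.
Proof. rewrite Mmx_xs; apply: shift_unit; lia. Qed.
End Spec.

Local Open Scope ring_scope.

Section Walk.
Variable N : network.

Fixpoint chain (s : node N) (es : seq (link N)) : bool :=
  if es is e :: es' then (ltail e == s) && chain (lhead e) es' else true.

Lemma path_links s p : path (step_avoid set0) s p ->
  exists es, map (@lhead N) es = p /\ chain s es.
Proof.
elim: p s => [|v p IH] s /=; first by exists [::].
case/andP => hst hp; case/existsP: hst => e /andP[/andP[_ /eqP ht] /eqP hh].
have [es [h1 h2]] := IH v hp.
by exists (e :: es); rewrite /= hh h1 ht eqxx h2.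
Qed.

Lemma chain_nth s es e0 k : chain s es -> (k.+1 < size es)%N ->
  lhead (nth e0 es k) = ltail (nth e0 es k.+1).
Proof.
elim: es s k => [|e es IH] s k //= /andP[_ hc].
case: k => [|k] hk /=.
  by case: es hc hk {IH} => [|e' es'] //= /andP[/eqP -> _].
exact: IH hc hk.
Qed.

Lemma chain_path e es : chain (lhead e) es ->
  path (fun a b => lhead a == ltail b) e es.
Proof.
elim: es e => [|e' es IH] e //= /andP[h hc].
by rewrite eq_sym h IH.
Qed.

Lemma walk_exists (s t : node N) : connect (step_avoid set0) s t -> s != t ->
  exists es : seq (link N), exists e0 : link N,
  [/\ (0 < size es)%N, uniq es, ltail (nth e0 es 0) = s,
      (forall k, (k.+1 < size es)%N -> lhead (nth e0 es k) = ltail (nth e0 es k.+1))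
    & lhead (nth e0 es (size es).-1) = t] /\ is_walk s t es.
Proof.
case/connectP => p hp ->{t}; case: (shortenP hp) => p' hp' hu _ hne.
have [es [hmap hch]] := path_links hp'.
case: es hmap hch => [|e es'] hmap hch.
  by move: hne; rewrite -hmap /= eqxx.
exists (e :: es'), e.
have hlast : lhead (last e es') = last s p'.
  by rewrite -hmap /= last_map.
move: (hch) => /= /andP[/eqP hs hch'].
split; first split => //.
- move: hu; rewrite -hmap => /andP[_ hu2]; by have := @map_uniq _ _ (@lhead N) (e :: es') hu2.
- by move=> k; exact: chain_nth hch.
- by rewrite -hlast (nth_last e (e :: es')).
- by rewrite /= hs eqxx chain_path //= hlast eqxx.
Qed.

Lemma walk_dmax i j (es : seq (link N)) :
  is_walk (src N i) (dst N j) es -> uniq es -> (size es <= dmax N)%N.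
Proof.
move=> hw hu.
have hs : (size es < #|link N|.+1)%N by rewrite ltnS -(card_uniqP hu) max_card.
rewrite /dmax.
apply: (@leq_bigmax_cond _ _ (fun L : 'I_#|link N|.+1 => nat_of_ord L) (Ordinal hs)).
apply/existsP; exists i; apply/existsP; exists j; apply/existsP; exists (in_tuple es).
exact: hw.
Qed.
End Walk.

Local Open Scope ring_scope.

Section Key.
Variables (R0 : comUnitRingType) (K : fieldType) (f : {rmorphism R0 -> K}).

Lemma invmx_map n (M : 'M[R0]_n) : f (\det M) != 0 ->
  invmx (map_mx f M) = (f (\det M))^-1 *: map_mx f (\adj M).
Proof.
move=> h; rewrite /invmx unitmxE unitfE det_map_mx h map_mx_adj //.
Qed.

Variables (n a b : nat).

Lemma key_r (V : 'M[R0]_(n, a)) (P Q : 'M[R0]_n) (W1 W2 : 'M[R0]_n) (Bm : 'M[R0]_(a, b)) :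
  f (\det P) != 0 -> f (\det Q) != 0 ->
  \rank (row_mx (map_mx f V) (invmx (map_mx f P) *m map_mx f W1 *m
          (invmx (map_mx f Q) *m map_mx f W2 *m map_mx f V *m map_mx f Bm)))
  = \rank (map_mx f (row_mx V (\adj P *m W1 *m \adj Q *m W2 *m V *m Bm))).
Proof.
move=> hP hQ; rewrite (invmx_map hP) (invmx_map hQ) map_row_mx !map_mxM.
rewrite -!scalemxAl -scalemxAr scalerA !mulmxA rank_scale_r //.
by rewrite mulf_neq0 // invr_eq0.
Qed.

Lemma key_l (V : 'M[R0]_(n, a)) (P Q : 'M[R0]_n) (W1 W2 : 'M[R0]_n) (Bm : 'M[R0]_(a, b)) :
  f (\det P) != 0 -> f (\det Q) != 0 ->
  \rank (row_mx (invmx (map_mx f P) *m map_mx f W1 *m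
          (invmx (map_mx f Q) *m map_mx f W2 *m map_mx f V *m map_mx f Bm)) (map_mx f V))
  = \rank (map_mx f (row_mx (\adj P *m W1 *m \adj Q *m W2 *m V *m Bm) V)).
Proof.
move=> hP hQ; rewrite (invmx_map hP) (invmx_map hQ) map_row_mx !map_mxM.
rewrite -!scalemxAl -scalemxAr scalerA !mulmxA rank_scale_l //.
by rewrite mulf_neq0 // invr_eq0.
Qed.
End Key.

Local Open Scope ring_scope.

Lemma mx_eq_cols (R : comUnitRingType) m k (A B : 'M[R]_(m, k)) :
  (forall X : 'cV_k, A *m X = B *m X) -> A = B.
Proof.
move=> h; apply/matrixP => r c; have := h (delta_mx c 0).
by rewrite -!colE => /matrixP /(_ r 0); rewrite !mxE.
Qed.

Section Point.
Variables (K : fieldType) (n n1 n2 n3 : nat) (Mf : 'I_3 -> 'I_3 -> 'M[K]_n).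
Variables (V : 'M[K]_(n, n1)) (A : 'M[K]_(n1, n2)) (B : 'M[K]_(n1, n3)).
Local Notation V2' := (invmx (Mf i1 i2) *m Mf i0 i2 *m V *m A).
Local Notation V3' := (invmx (Mf i2 i1) *m Mf i0 i1 *m V *m B).
Local Notation Y j X1 X2 X3 :=
  (Mf i0 j *m V *m X1 + Mf i1 j *m V2' *m X2 + Mf i2 j *m V3' *m X3).

Lemma decode_point :
  Mf i0 i0 \in unitmx -> Mf i0 i1 \in unitmx -> Mf i0 i2 \in unitmx ->
  Mf i2 i1 \in unitmx -> Mf i1 i2 \in unitmx -> Mf i1 i0 = 0 ->
  \rank (row_mx V (invmx (Mf i0 i0) *m Mf i2 i0 *m V3')) = (n1 + n3)%N ->
  \rank (row_mx (invmx (Mf i0 i1) *m Mf i1 i1 *m V2') V) = (n1 + n2)%N ->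
  \rank (row_mx (invmx (Mf i0 i2) *m Mf i2 i2 *m V3') V) = (n1 + n3)%N ->
  [/\ exists G : 'M[K]_(n1, n), forall (X1 : 'cV_n1) (X2 : 'cV_n2) (X3 : 'cV_n3), G *m Y i0 X1 X2 X3 = X1,
      exists G : 'M[K]_(n2, n), forall (X1 : 'cV_n1) (X2 : 'cV_n2) (X3 : 'cV_n3), G *m Y i1 X1 X2 X3 = X2
    & exists G : 'M[K]_(n3, n), forall (X1 : 'cV_n1) (X2 : 'cV_n2) (X3 : 'cV_n3), G *m Y i2 X1 X2 X3 = X3].
Proof.
move=> u00 u01 u02 u21 u12 z10 r1 r2 r3; split.
- have [G hG] := decode_gen r1; exists (G *m invmx (Mf i0 i0)) => X1 X2 X3.
  suff E : invmx (Mf i0 i0) *m Y i0 X1 X2 X3 =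
    row_mx V (invmx (Mf i0 i0) *m Mf i2 i0 *m V3') *m col_mx X1 X3.
    by rewrite -mulmxA E hG.
  rewrite mul_row_col z10 !mul0mx addr0 !mulmxDr !mulmxA mulVmx // mul1mx.
  by rewrite -!mulmxA.
- have [G hG] := decode_gen (etrans r2 (addnC _ _)); exists (G *m invmx (Mf i0 i1)) => X1 X2 X3.
  suff E : invmx (Mf i0 i1) *m Y i1 X1 X2 X3 =
    row_mx (invmx (Mf i0 i1) *m Mf i1 i1 *m V2') V *m col_mx X2 (X1 + B *m X3).
    by rewrite -mulmxA E hG.
  rewrite mul_row_col !mulmxDr !mulmxA mulVmx // mul1mx (mulmxK u21) mulVmx // mul1mx.
  by rewrite -addrA addrCA.
- have [G hG] := decode_gen (etrans r3 (addnC _ _)); exists (G *m invmx (Mf i0 i2)) => X1 X2 X3.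
  suff E : invmx (Mf i0 i2) *m Y i2 X1 X2 X3 =
    row_mx (invmx (Mf i0 i2) *m Mf i2 i2 *m V3') V *m col_mx X3 (X1 + A *m X2).
    by rewrite -mulmxA E hG.
  rewrite mul_row_col !mulmxDr !mulmxA mulVmx // mul1mx (mulmxK u12) mulVmx // mul1mx.
  by rewrite addrC.
Qed.

Lemma rank_point :
  Mf i0 i0 \in unitmx -> Mf i2 i0 \in unitmx -> Mf i0 i1 \in unitmx ->
  Mf i0 i2 \in unitmx ->
  [/\ exists G : 'M[K]_(n1, n), forall (X1 : 'cV_n1) (X2 : 'cV_n2) (X3 : 'cV_n3), G *m Y i0 X1 X2 X3 = X1,
      exists G : 'M[K]_(n2, n), forall (X1 : 'cV_n1) (X2 : 'cV_n2) (X3 : 'cV_n3), G *m Y i1 X1 X2 X3 = X2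
    & exists G : 'M[K]_(n3, n), forall (X1 : 'cV_n1) (X2 : 'cV_n2) (X3 : 'cV_n3), G *m Y i2 X1 X2 X3 = X3] ->
  [/\ \rank (row_mx V (invmx (Mf i0 i0) *m Mf i2 i0 *m V3')) = (n1 + n3)%N,
      \rank (row_mx (invmx (Mf i0 i1) *m Mf i1 i1 *m V2') V) = (n1 + n2)%N
    & \rank (row_mx (invmx (Mf i0 i2) *m Mf i2 i2 *m V3') V) = (n1 + n3)%N].
Proof.
move=> u00 u20 u01 u02 [[G1 h1] [G2 h2] [G3 h3]].
have a1 : G1 *m Mf i0 i0 *m V = 1%:M.
  apply: mx_eq_cols => X; rewrite mul1mx -!mulmxA; have := h1 X 0 0.
  by rewrite !mulmx0 !addr0 !mulmxA.
have a2 : G1 *m Mf i2 i0 *m V3' = 0.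
  apply: mx_eq_cols => X; rewrite mul0mx; have := h1 0 0 X.
  by rewrite !mulmx0 !add0r !mulmxA.
have b1 : G2 *m Mf i1 i1 *m V2' = 1%:M.
  apply: mx_eq_cols => X; rewrite mul1mx; have := h2 0 X 0.
  by rewrite !mulmx0 add0r addr0 !mulmxA.
have b2 : G2 *m Mf i0 i1 *m V = 0.
  apply: mx_eq_cols => X; rewrite mul0mx; have := h2 X 0 0.
  by rewrite !mulmx0 !addr0 !mulmxA.
have c1 : G3 *m Mf i2 i2 *m V3' = 1%:M.
  apply: mx_eq_cols => X; rewrite mul1mx; have := h3 0 0 X.
  by rewrite !mulmx0 !add0r !mulmxA.
have c2 : G3 *m Mf i0 i2 *m V = 0.
  apply: mx_eq_cols => X; rewrite mul0mx; have := h3 X 0 0.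
  by rewrite !mulmx0 !addr0 !mulmxA.
rewrite !mulmxA in a1 a2 b1 b2 c1 c2.
split.
- apply: (@leftinv_rank _ _ _ _ _ _ (G1 *m Mf i0 i0) (G3 *m Mf i2 i2 *m invmx (Mf i2 i0) *m Mf i0 i0)).
  + by rewrite ?mulmxA.
  + by rewrite ?mulmxA (mulmxK u00).
  + by rewrite ?mulmxA (mulmxK u00) mulmxKV.
- rewrite [RHS]addnC; apply: (@leftinv_rank _ _ _ _ _ _ (G2 *m Mf i0 i1) (G1 *m Mf i0 i0)).
  + by rewrite ?mulmxA (mulmxK u01).
  + by rewrite ?mulmxA.
  + by rewrite ?mulmxA.
- rewrite [RHS]addnC; apply: (@leftinv_rank _ _ _ _ _ _ (G3 *m Mf i0 i2) (G1 *m Mf i0 i0)).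
  + by rewrite ?mulmxA (mulmxK u02).
  + by rewrite ?mulmxA.
  + by rewrite ?mulmxA.
Qed.
End Point.

Local Open Scope ring_scope.

Lemma ord3 (i : 'I_3) : [\/ i = i0, i = i1 | i = i2].
Proof.
case: i => [[|[|[|k]]] hi]; [apply: Or31|apply: Or32|apply: Or33|by []]; exact: val_inj.
Qed.

Lemma invmx0 (R : comUnitRingType) n : (0 < n)%N -> invmx (0 : 'M[R]_n) = 0.
Proof.
case: n => // n _; rewrite /invmx unitmxE det0 unitr0 //.
Qed.

Section RcNz.
Variables (K : fieldType) (n n1 n2 n3 : nat) (Mf : 'I_3 -> 'I_3 -> 'M[K]_n).
Variables (V : 'M[K]_(n, n1)) (A : 'M[K]_(n1, n2)) (B : 'M[K]_(n1, n3)).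
Local Notation V2' := (invmx (Mf i1 i2) *m Mf i0 i2 *m V *m A).
Local Notation V3' := (invmx (Mf i2 i1) *m Mf i0 i1 *m V *m B).

Lemma rc_nz : (0 < n)%N -> (0 < n3)%N -> (n3 <= n2)%N ->
  \rank (row_mx V (invmx (Mf i0 i0) *m Mf i2 i0 *m V3')) = (n1 + n3)%N ->
  \rank (row_mx (invmx (Mf i0 i1) *m Mf i1 i1 *m V2') V) = (n1 + n2)%N ->
  \rank (row_mx (invmx (Mf i0 i2) *m Mf i2 i2 *m V3') V) = (n1 + n3)%N ->
  forall i j, (i, j) != (i1, i0) -> Mf i j != 0.
Proof.
move=> hn h3 h32 r1 r2 r3 i j hij; apply/negP => /eqP h0.
have hV := rank_leq_col V.
case: (ord3 i) => ?; case: (ord3 j) => ?; subst i j => //;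
  rewrite ?h0 ?invmx0 // ?mul0mx ?mulmx0 ?mul0mx ?mulmx0 ?rank_row_mx0 ?rank_row_0mx in r1 r2 r3; lia.
Qed.
End RcNz.

Local Close Scope ring_scope.
Unset Implicit Arguments.
Theorem theorem6 (p : nat) (N : network) (n n1 n2 n3 : nat) :
  prime p ->
  acyclic N ->
  (forall i : 'I_3, mincut (src N i) (dst N i) = 1) ->
  mincut (src N i1) (dst N i0) = 0 ->
  (forall i j : 'I_3, (i, j) != (i1, i0) -> 0 < mincut (src N i) (dst N j)) ->
  dmax N < n ->
  0 < n3 -> n3 <= n2 -> n2 <= n1 -> n1 <= n ->
  (rank_conditions N n n1 n2 n3 p ->
     exists q0 : nat, forall F : finFieldType, (p \in [pchar F])%R -> q0 < #|F| ->
       exists x : Var N n n1 n2 n3 -> F,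
         admissible x /\ decodable x)
  /\
  (n1 + n2 = n -> n1 + n3 = n ->
     forall F : finFieldType, (p \in [pchar F])%R ->
     forall x : Var N n n1 n2 n3 -> F,
       admissible x -> decodable x -> rank_conditions N n n1 n2 n3 p).
Proof.
move=> pr hac _ hcut0 hcut hdn hn3 h32 h21 h1n.
pose R0 := {mpoly 'F_p[#|Var N n n1 n2 n3|]}.
pose Xv : Var N n n1 n2 n3 -> R0 := fun v => 'X_(enum_rank v).
pose Mp := Mmx Xv.
have hn0 : (0 < n)%N by lia.
have M10 : forall (R : comUnitRingType) (x : Var N n n1 n2 n3 -> R), Mmx x i1 i0 = 0%R.
  by move=> R x; apply: Mmx_zero; apply: mincut_eq0.
have detnz : forall i j, (i, j) != (i1, i0) -> src N i != dst N j -> (\det (Mp i j) != 0)%R.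
  move=> i j hij hsd.
  have hc := mincut_gt0 (hcut i j hij).
  have [es [e0 [[hL0 hu ht hch hh] hw]]] := walk_exists hc hsd.
  have hLd := walk_dmax hw hu.
  have hU := Mmx_xs_unit n1 n2 n3 'F_p hL0 hu ht hch hh hLd hdn.
  set xv := xs _ _ _ in hU.
  pose pt := fun k : 'I_#|Var N n n1 n2 n3| => xv (enum_val k).
  have Ex : (fun v => meval pt (Xv v)) = xv.
    apply: functional_extensionality => v; by rewrite /Xv mevalXU /pt enum_rankK.
  have := Mmx_map (meval pt) Xv i j; rewrite Ex => Em.
  move: hU; rewrite Em unitmxE unitfE det_map_mx.
  by apply: contraNneq => ->; by rewrite rmorph0.
have EMg : forall i j, Mmx (xsym p) i j = map_mx (@tofrac R0) (Mp i j).
  by move=> i j; exact: (Mmx_map (@tofrac R0) Xv i j).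
have EV1g : V1 (xsym p) = map_mx (@tofrac R0) (V1 Xv) by exact: (V1_map (@tofrac R0) Xv).
have EAg : Amx (xsym p) = map_mx (@tofrac R0) (Amx Xv) by exact: (Amx_map (@tofrac R0) Xv).
have EBg : Bmx (xsym p) = map_mx (@tofrac R0) (Bmx Xv) by exact: (Bmx_map (@tofrac R0) Xv).
split.
- move=> rc; have [r1 r2 r3] := rc.
  rewrite /V2 /V3 in r1 r2 r3.
  have nzg := rc_nz hn0 hn3 h32 r1 r2 r3.
  have dnz : forall i j, (i, j) != (i1, i0) -> (\det (Mp i j) != 0)%R.
    move=> i j hij; case: (eqVneq (src N i) (dst N j)) => hsd; last exact: detnz.
    by move: (nzg i j hij); rewrite (Mmx_zero_loop _ hac hsd) eqxx.
  have tnz : forall i j, (i, j) != (i1, i0) -> (@tofrac R0 (\det (Mp i j)) != 0)%R.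
    by move=> i j h; rewrite tofrac_eq0 dnz.
  rewrite !EMg EV1g EAg EBg in r1 r2 r3.
  rewrite key_r ?tnz // in r1.
  rewrite key_l ?tnz // in r2.
  rewrite key_l ?tnz // in r3.
  have [s1 hs1] := minor_of_rank r1.
  have [s2 hs2] := minor_of_rank (etrans r2 (addnC _ _)).
  have [s3 hs3] := minor_of_rank (etrans r3 (addnC _ _)).
  rewrite tofrac_eq0 in hs1; rewrite tofrac_eq0 in hs2; rewrite tofrac_eq0 in hs3.
  set m1 := (\det (rowsub s1 _))%R in hs1.
  set m2 := (\det (rowsub s2 _))%R in hs2.
  set m3 := (\det (rowsub s3 _))%R in hs3.
  pose P : R0 := (m1 * m2 * m3 * \det (Mp i0 i0) * \det (Mp i0 i1) * \det (Mp i0 i2)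
     * \det (Mp i1 i1) * \det (Mp i1 i2) * \det (Mp i2 i0) * \det (Mp i2 i1)
     * \det (Mp i2 i2))%R.
  have hP : (P != 0)%R by rewrite !mulf_neq0 ?dnz.
  exists (msize P) => F chF hF.
  pose PF := map_mpoly (phiR pr chF) P.
  have [pt hpt] : exists pt, (meval pt PF != 0)%R.
    apply: SZ; first by rewrite map_mpoly_phi_eq0.
    by rewrite msize_map_phi ltnW.
  pose ev : {rmorphism R0 -> F} := (meval pt \o map_mpoly (phiR pr chF)).
  have hev : (ev P != 0)%R := hpt.
  move: hev; rewrite !rmorphM !mulf_eq0 !negb_or.
  move=> /andP[/andP[/andP[/andP[/andP[/andP[/andP[/andP[/andP[/andP[e1 e2] e3] e4] e5] e6] e7] e8] e9] e10] e11].
  have evd : forall i j, (i, j) != (i1, i0) -> (ev (\det (Mp i j)) != 0)%R.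
    move=> i j; (case: (ord3 i) => ->; case: (ord3 j) => ->);
      [move=> _; exact: e4 | move=> _; exact: e5 | move=> _; exact: e6 | move=> h; exfalso; exact: (negP h (eqxx _))
      | move=> _; exact: e7 | move=> _; exact: e8
      | move=> _; exact: e9 | move=> _; exact: e10 | move=> _; exact: e11].
  exists (fun v => ev (Xv v)).
  have EMx : forall i j, Mmx (fun v => ev (Xv v)) i j = map_mx ev (Mp i j).
    by move=> i j; exact: (Mmx_map ev Xv i j).
  split.
  + move=> i j hij; rewrite EMx unitmxE unitfE det_map_mx; exact: (evd _ _ hij).
  + apply: decode_point.
    * rewrite EMx unitmxE unitfE det_map_mx; exact: e4.
    * rewrite EMx unitmxE unitfE det_map_mx; exact: e5.
    * rewrite EMx unitmxE unitfE det_map_mx; exact: e6.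
    * rewrite EMx unitmxE unitfE det_map_mx; exact: e10.
    * rewrite EMx unitmxE unitfE det_map_mx; exact: e8.
    * exact: M10.
    * rewrite !EMx (V1_map ev Xv) (Bmx_map ev Xv) (key_r _ _ _ _ e4 e10); exact: (rank_of_minor e1).
    * rewrite !EMx (V1_map ev Xv) (Amx_map ev Xv) (key_l _ _ _ _ e5 e8) [RHS]addnC; exact: (rank_of_minor e2).
    * rewrite !EMx (V1_map ev Xv) (Bmx_map ev Xv) (key_l _ _ _ _ e6 e10) [RHS]addnC; exact: (rank_of_minor e3).
- move=> hn12 hn13 F chF x adm dec.
  pose pt := fun k : 'I_#|Var N n n1 n2 n3| => x (enum_val k).
  pose ev : {rmorphism R0 -> F} := (meval pt \o map_mpoly (phiR pr chF)).
  have Ex : (fun v => ev (Xv v)) = x.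
    apply: functional_extensionality => v.
    change (meval pt (map_mpoly (phiR pr chF) 'X_(enum_rank v)) = x v).
    by rewrite map_mpolyX mevalXU /pt enum_rankK.
  have EMx : forall i j, Mmx x i j = map_mx ev (Mp i j).
    by move=> i j; rewrite -[in LHS]Ex; exact: (Mmx_map ev Xv i j).
  have EV1x : V1 x = map_mx ev (V1 Xv) by rewrite -[in LHS]Ex; exact: (V1_map ev Xv).
  have EAx : Amx x = map_mx ev (Amx Xv) by rewrite -[in LHS]Ex; exact: (Amx_map ev Xv).
  have EBx : Bmx x = map_mx ev (Bmx Xv) by rewrite -[in LHS]Ex; exact: (Bmx_map ev Xv).
  have u : forall i j, (i, j) != (i1, i0) -> (ev (\det (Mp i j)) != 0)%R.
    by move=> i j h; move: (adm i j h); rewrite EMx unitmxE unitfE det_map_mx.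
  have g : forall i j, (i, j) != (i1, i0) -> (@tofrac R0 (\det (Mp i j)) != 0)%R.
    move=> i j h; rewrite tofrac_eq0; apply: contraNneq (u i j h) => ->; by rewrite rmorph0.
  have [q1 q2 q3] := rank_point (Mf := Mmx x) (V := V1 x) (A := Amx x) (B := Bmx x)
    (adm i0 i0 isT) (adm i2 i0 isT) (adm i0 i1 isT) (adm i0 i2 isT) dec.
  rewrite !EMx EV1x EAx EBx in q1 q2 q3.
  rewrite (key_r _ _ _ _ (u i0 i0 isT) (u i2 i1 isT)) in q1.
  rewrite (key_l _ _ _ _ (u i0 i1 isT) (u i1 i2 isT)) in q2.
  rewrite (key_l _ _ _ _ (u i0 i2 isT) (u i2 i1 isT)) in q3.
  have [s1 hs1] := minor_of_rank q1.
  have [s2 hs2] := minor_of_rank (etrans q2 (addnC _ _)).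
  have [s3 hs3] := minor_of_rank (etrans q3 (addnC _ _)).
  have t1 : (@tofrac R0 (\det (rowsub s1 (row_mx (V1 Xv) (\adj (Mp i0 i0) *m Mp i2 i0 *m \adj (Mp i2 i1) *m Mp i0 i1 *m V1 Xv *m Bmx Xv)))) != 0)%R.
    rewrite tofrac_eq0; apply: contraNneq hs1 => ->; by rewrite rmorph0.
  have t2 : (@tofrac R0 (\det (rowsub s2 (row_mx (\adj (Mp i0 i1) *m Mp i1 i1 *m \adj (Mp i1 i2) *m Mp i0 i2 *m V1 Xv *m Amx Xv) (V1 Xv)))) != 0)%R.
    rewrite tofrac_eq0; apply: contraNneq hs2 => ->; by rewrite rmorph0.
  have t3 : (@tofrac R0 (\det (rowsub s3 (row_mx (\adj (Mp i0 i2) *m Mp i2 i2 *m \adj (Mp i2 i1) *m Mp i0 i1 *m V1 Xv *m Bmx Xv) (V1 Xv)))) != 0)%R.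
    rewrite tofrac_eq0; apply: contraNneq hs3 => ->; by rewrite rmorph0.
  unfold rank_conditions; cbv zeta; rewrite /V2 /V3 !EMg EV1g EAg EBg.
  split.
  + rewrite (key_r _ _ _ _ (g i0 i0 isT) (g i2 i1 isT)); exact: (rank_of_minor t1).
  + rewrite (key_l _ _ _ _ (g i0 i1 isT) (g i1 i2 isT)) [RHS]addnC; exact: (rank_of_minor t2).
  + rewrite (key_l _ _ _ _ (g i0 i2 isT) (g i2 i1 isT)) [RHS]addnC; exact: (rank_of_minor t3).
Qed.
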